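(* Let $X$ be a random variable uniformly distributed in $[0,1)$. For any sequence $\mathrm{a}=(a_n)_{n\ge1}$ of positive integers and any sequence $\mathrm{r}=(r_n)_{n\ge1}$ of reals in $(0,1]$, $$\Theta((\{a_nX\})_{n\ge1},\mathcal{B}(\mathrm{r}))\le 3\exp\left(4\sum_{n=1}^\infty\frac{a_n}{r_na_{n+1}}\right).$$
   Context: $\{\cdot\}$ is the fractional part, viewed as the projection $\mathbb{R}\to\mathbb{T}=\mathbb{R}/\mathbb{Z}$. For a sequence $\mathrm{X}=(X_n)$ of random points of $\mathbb{T}$ and a sequence $\mathrm{B}=(B_n)$ of Borel subsets of $\mathbb{T}$ of positive Lebesgue measure, $\theta(\mathrm{X},\mathrm{B})=\sup_{n\ge1}\frac{\mathbb{P}(X_1\in B_1,\dots,X_n\in B_n)}{\prod_{i=1}^n\mathbb{P}(X_i\in B_i)}$ and $\Theta(\mathrm{X},\mathcal{B})=\sup_{\mathrm{B}\in\mathcal{B}}\theta(\mathrm{X},\mathrm{B})$. With $q_n=\lceil1/r_n\rceil$ and $I_{n,k}$ the image of $[k/q_n,(k+1)/q_n)$ in $\mathbb{T}$ for $0\le k<q_n$, $\mathcal{B}(\mathrm{r})$ is the collection of all sequences $(I_{n,k_n})_{n\ge1}$ with integers $0\le k_n<q_n$. *)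

(* Defs.v *)
From HB Require Import structures.
From mathcomp Require Import all_boot all_order all_algebra.
From mathcomp Require Import all_classical all_reals all_analysis.
Set Implicit Arguments. Unset Strict Implicit. Unset Printing Implicit Defensive.
Import Order.TTheory GRing.Theory Num.Theory.
Local Open Scope classical_set_scope.
Local Open Scope ring_scope.

Section Defs.
Context (R : realType).

(* fractional part {x} in [0,1); R/Z is represented by [0,1) *)
Definition fracpart (x : R) : R := x - (Num.floor x)%:~R.

Definition qn (r : nat -> R) (n : nat) : int := Num.ceil (r n)^-1.

(* I_{n,k} = image of [k/q_n, (k+1)/q_n) in T, seen as a subset of [0,1) *)
Definition Ink (r : nat -> R) (n : nat) (k : int) : set R :=
  [set y | (k%:~R / (qn r n)%:~R <= y) && (y < (k + 1)%:~R / (qn r n)%:~R)].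

(* B(r): sequences (I_{n,k_n})_{n>=1} with 0 <= k_n < q_n; encoded by k *)
Definition admissible (r : nat -> R) (k : nat -> int) : Prop :=
  forall n, (1 <= n)%N -> 0 <= k n < qn r n.

Context {d : measure_display} {T : measurableType d} (P : probability T R).

Definition joint_prob (X : nat -> T -> R) (B : nat -> set R) (n : nat) : \bar R :=
  P [set w | forall i, (1 <= i <= n)%N -> B i (X i w)].

Definition marg_prob (X : nat -> T -> R) (B : nat -> set R) (i : nat) : \bar R :=
  P [set w | B i (X i w)].

Definition theta (X : nat -> T -> R) (B : nat -> set R) : \bar R :=
  ereal_sup [set ((fine (joint_prob X B n)) /
                  \prod_(1 <= i < n.+1) fine (marg_prob X B i))%:E
            | n in [set n : nat | (1 <= n)%N]].

Definition Theta_r (X : nat -> T -> R) (r : nat -> R) : \bar R :=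
  ereal_sup [set theta X (fun n => Ink r n (k n)) | k in admissible r].

End Defs.

(* Main.v *)
Require Import Defs.
From HB Require Import structures.
From mathcomp Require Import all_boot all_order all_algebra.
From mathcomp Require Import all_classical all_reals all_analysis.
From mathcomp Require Import ring lra zify.
Import Order.TTheory GRing.Theory Num.Theory.
Local Open Scope classical_set_scope.
Local Open Scope ring_scope.
Section Core.
Context (R : realType).
Local Notation lam := (@lebesgue_measure R).

Definition frp (x : R) : R := x - (Num.floor x)%:~R.
Definition piece (a c w : R) (m : int) : set R := [set x | c <= a * x - m%:~R < c + w].
Definition Wset (a c w : R) : set R := [set x | c <= frp (a * x) < c + w].

Lemma piece_itv a c w m : 0 < a ->
  piece a c w m = `[(m%:~R + c) / a, (m%:~R + c + w) / a[%classic.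
Proof.
move=> a0; apply/seteqP; split => x /=; rewrite in_itv /=;
  rewrite !ler_pdivrMr // ?ltr_pdivlMr // ?ler_pdivlMr // ?ltr_pdivrMr //.
- by move=> /andP[h1 h2]; apply/andP; split; lra.
- by move=> /andP[h1 h2]; apply/andP; split; lra.
Qed.

Lemma piece_floor a c w m x : 0 <= c -> c + w <= 1 -> piece a c w m x ->
  Num.floor (a * x) = m.
Proof.
move=> c0 cw /andP[h1 h2]; apply: floor_def; rewrite intrD; apply/andP; split; lra.
Qed.

Lemma Wset_piece a c w x : Wset a c w x -> piece a c w (Num.floor (a * x)) x.
Proof. by []. Qed.

Lemma piece_Wset a c w m x : 0 <= c -> c + w <= 1 -> piece a c w m x -> Wset a c w x.
Proof.
move=> c0 cw px; rewrite /Wset /= /frp (@piece_floor a c w m x c0 cw px); exact: px.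
Qed.

Lemma measurable_piece a c w m : 0 < a -> measurable (piece a c w m).
Proof. by move=> a0; rewrite piece_itv. Qed.

Lemma Wset_bigcup a c w : 0 <= c -> c + w <= 1 ->
  Wset a c w = \bigcup_(i in setT) (piece a c w (Posz i) `|` piece a c w (Negz i)).
Proof.
move=> c0 cw; apply/seteqP; split => x.
  move=> /Wset_piece; case E: (Num.floor (a * x)) => [i|i] px.
  - by exists i => //; left.
  - by exists i => //; right.
by move=> [i _ [] px]; apply: (@piece_Wset a c w _ x c0 cw px).
Qed.

Lemma measurable_Wset a c w : 0 < a -> 0 <= c -> c + w <= 1 ->
  measurable (Wset a c w).
Proof.
move=> a0 c0 cw; rewrite Wset_bigcup //; apply: bigcup_measurable => i _.
by apply: measurableU; apply: measurable_piece.
Qed.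

Lemma lam_piece a c w m : 0 < a -> 0 < w -> lam (piece a c w m) = (w / a)%:E.
Proof.
move=> a0 w0; rewrite piece_itv // lebesgue_measure_itv /= lte_fin.
rewrite ltr_pM2r ?invr_gt0 // ltrDl w0 -EFinD; congr (_%:E).
by rewrite -mulrBl; congr (_ * _); ring.
Qed.

End Core.
Arguments frp {R}.
Arguments piece {R}.
Arguments Wset {R}.
Section Count.
Context (R : realType).
Local Notation lam := (@lebesgue_measure R).

Lemma count_bound (a c w u v beta : R) (Q S : set R) :
  0 < a -> 0 <= c -> c + w <= 1 -> 0 <= beta -> u <= v ->
  measurable Q -> measurable S -> Q `<=` `[u, v]%classic ->
  (forall m, (lam (piece a c w m `&` S) <= beta%:E)%E) ->
  (lam (Q `&` (Wset a c w `&` S)) <= (((v - u) * a + 2) * beta)%:E)%E.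
Proof.
move=> a0 c0 cw b0 uv mQ mS QI hb.
set m0 := Num.floor (a * u).
set m1 := Num.floor (a * v).
have m01 : m0 <= m1 by apply: le_floor; rewrite ler_pM2l.
set N := `|(m1 - m0 + 1)%R|%N.
have sub : Q `&` (Wset a c w `&` S) `<=`
    \big[setU/set0]_(i < N) (piece a c w (m0 + (i : nat)%:Z) `&` S).
  move=> x [Qx [Wx Sx]]; rewrite -(bigcup_mkord N (fun i => piece a c w (m0 + i%:Z) `&` S)).
  have /andP[ux xv] : u <= x <= v by have := QI x Qx; rewrite /= in_itv.
  have h0 : m0 <= Num.floor (a * x) by apply: le_floor; rewrite ler_pM2l.
  have h1 : Num.floor (a * x) <= m1 by apply: le_floor; rewrite ler_pM2l.
  exists `|(Num.floor (a * x) - m0)%R|%N.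
    rewrite /= /N; lia.
  split => //.
  have -> : m0 + (`|(Num.floor (a * x) - m0)%R|%N)%:Z = Num.floor (a * x).
    rewrite gez0_abs ?subr_ge0 //; ring.
  exact: Wset_piece.
apply: le_trans (@content_subadditive _ _ _ lam _ (fun i : nat => piece a c w (m0 + i%:Z) `&` S) N _ _ sub) _.
- by move=> k _; apply: measurableI => //; apply: measurable_piece.
- apply: measurableI => //; apply: measurableI => //.
  by apply: measurable_Wset.
apply: (@le_trans _ _ (\sum_(k < N) beta%:E)%E).
  by apply: lee_sum => k _; apply: hb.
rewrite sumEFin sumr_const card_ord lee_fin -[beta *+ N]mulr_natl; apply: ler_wpM2r => //.
have -> : (N%:R : R) = (m1 - m0 + 1)%:~R.
  by rewrite natr_absz ger0_norm //; lia.
rewrite !intrD intrN.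
have := floor_le (a * v); have := floorD1_gt (a * u); rewrite intrD.
rewrite -/m0 -/m1 => h1 h2; lra.
Qed.

End Count.
Section Chain.
Context (R : realType) (A C Wd : nat -> R).
Local Notation lam := (@lebesgue_measure R).
Hypothesis hyp : forall i, (1 <= i)%N ->
  [/\ 0 < A i, 0 <= C i, 0 < Wd i & C i + Wd i <= 1].

Definition Wi i := Wset (A i) (C i) (Wd i).
Definition Bset j len := [set x | forall i, (j <= i < j + len)%N -> Wi i x].
Fixpoint beta j len := match len with
  | 0 => Wd j / A j
  | len'.+1 => (Wd j / A j * A j.+1 + 2) * beta j.+1 len' end.

Lemma Bset0 j : Bset j 0 = setT.
Proof. by apply/seteqP; split => x // _ i; lia. Qed.

Lemma BsetS j len : Bset j len.+1 = Wi j `&` Bset j.+1 len.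
Proof.
apply/seteqP; split => x.
  by move=> h; split; [apply: h; lia | move=> i hi; apply: h; lia].
move=> [h0 h] i hi; have [->|ne] := eqVneq i j => //; apply: h; lia.
Qed.

Lemma measurable_Wi i : (1 <= i)%N -> measurable (Wi i).
Proof. by move=> /hyp[? ? ? ?]; apply: measurable_Wset. Qed.

Lemma measurable_Bset len : forall j, (1 <= j)%N -> measurable (Bset j len).
Proof.
elim: len => [|len IH] j j1; first by rewrite Bset0.
rewrite BsetS; apply: measurableI; first exact: measurable_Wi.
by apply: IH; lia.
Qed.

Lemma beta_ge0 len : forall j, (1 <= j)%N -> 0 <= beta j len.
Proof.
elim: len => [|len IH] j j1 /=; have [? ? ? ?] := hyp j j1.
  by apply: divr_ge0; apply: ltW.
apply: mulr_ge0; last by apply: IH; lia.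
have /hyp[? ? ? ?] : (1 <= j.+1)%N by lia.
apply: addr_ge0 => //; apply: mulr_ge0; last exact: ltW.
by apply: divr_ge0; apply: ltW.
Qed.

Lemma claim len : forall j, (1 <= j)%N -> forall m,
  (lam (piece (A j) (C j) (Wd j) m `&` Bset j.+1 len) <= (beta j len)%:E)%E.
Proof.
elim: len => [|len IH] j j1 m; have [A0 C0 W0 CW] := hyp j j1.
  by rewrite Bset0 setIT lam_piece.
have /hyp[A0' C0' W0' CW'] : (1 <= j.+1)%N by lia.
rewrite BsetS.
set u := (m%:~R + C j) / A j; set v := (m%:~R + C j + Wd j) / A j.
apply: le_trans (@count_bound _ (A j.+1) (C j.+1) (Wd j.+1) u v (beta j.+1 len)
   (piece (A j) (C j) (Wd j) m) (Bset j.+2 len) A0' C0' CW' (beta_ge0 len j.+1 (ltn0Sn j)) _ _ _ _ _) _.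
- rewrite /u /v ler_pM2r ?invr_gt0 //; lra.
- exact: measurable_piece.
- by apply: measurable_Bset; lia.
- rewrite piece_itv // => x; rewrite /= !in_itv /= => /andP[h1 h2].
  by rewrite h1 ltW.
- by move=> m'; apply: IH; lia.
rewrite /= lee_fin; apply: ler_wpM2r; first by apply: beta_ge0; lia.
have -> : v - u = Wd j / A j by rewrite /u /v -mulrBl; congr (_ * _); ring.
done.
Qed.

Lemma final len :
  (lam (`[0%R, 1%R]%classic `&` Bset 1 len.+1) <= ((A 1 + 2) * beta 1 len)%:E)%E.
Proof.
have /hyp[A0 C0 W0 CW] : (1 <= 1)%N by [].
rewrite BsetS.
apply: le_trans (@count_bound _ (A 1) (C 1) (Wd 1) 0 1 (beta 1 len)
   `[0%R, 1%R]%classic (Bset 2 len) A0 C0 CW (beta_ge0 len 1 (ltn0Sn 0)) _ _ _ _ _) _ => //.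
- by apply: measurable_Bset.
- by move=> m; apply: claim.
by rewrite subr0 mul1r.
Qed.

Lemma beta_bound len : forall j, (1 <= j)%N ->
  beta j len <= (\prod_(j <= i < j + len.+1) Wd i) / A j *
     expR (\sum_(j <= i < j + len) (2 * A i / (Wd i * A i.+1))).
Proof.
elim: len => [|len IH] j j1; have [A0 C0 W0 CW] := hyp j j1.
  by rewrite /= addn1 big_nat1 big_geq ?addn0 // expR0 mulr1.
have /hyp[A0' C0' W0' CW'] : (1 <= j.+1)%N by lia.
rewrite /=.
rewrite (big_ltn (_ : (j < j + len.+2)%N)); last lia.
rewrite (big_ltn (_ : (j < j + len.+1)%N)); last lia.
rewrite expRD.
have -> : (j + len.+2 = j.+1 + len.+1)%N by lia.
have -> : (j + len.+1 = j.+1 + len)%N by lia.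
set Pr := \prod_(j.+1 <= i < j.+1 + len.+1) Wd i.
set E := expR (\sum_(j.+1 <= i < j.+1 + len) (2 * A i / (Wd i * A i.+1))).
apply: le_trans (_ : (Wd j / A j * A j.+1 + 2) * (Pr / A j.+1 * E) <= _).
  apply: ler_wpM2l; last by apply: IH; lia.
  apply: addr_ge0 => //; apply: mulr_ge0; last exact: ltW.
  by apply: divr_ge0; apply: ltW.
have Pr0 : 0 <= Pr.
  rewrite /Pr big_nat_cond; apply: prodr_ge0 => i /andP[/andP[hi _] _].
  have /hyp[_ _ ? _] : (1 <= i)%N by lia.
  exact: ltW.
have E0 : 0 <= E by apply: ltW; apply: expR_gt0.
have -> : (Wd j / A j * A j.+1 + 2) * (Pr / A j.+1 * E) =
   (Wd j * Pr / A j * E) * (1 + 2 * A j / (Wd j * A j.+1)).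
  by field; apply/and3P; split; apply: lt0r_neq0.
rewrite [X in _ <= X](_ : _ = Wd j * Pr / A j * E * expR (2 * A j / (Wd j * A j.+1))); last by ring.
apply: ler_wpM2l; last exact: expR_ge1Dx.
apply: mulr_ge0 => //; apply: mulr_ge0; last by rewrite invr_ge0 ltW.
by apply: mulr_ge0 => //; apply: ltW.
Qed.

End Chain.
Arguments Wi {R}.
Arguments Bset {R}.
Arguments beta {R}.
Section Marg.
Context (R : realType).
Local Notation lam := (@lebesgue_measure R).

Lemma marg_lb (n : nat) (c w : R) : (0 < n)%N -> 0 <= c -> 0 < w -> c + w <= 1 ->
  (w%:E <= lam (Wset n%:R c w `&` `[0%R, 1%R]%classic))%E.
Proof.
move=> n0 c0 w0 cw.
have nR : (0 : R) < n%:R by rewrite ltr0n.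
pose F := fun i : 'I_n => piece n%:R c w (nat_of_ord i)%:Z.
have sub : \big[setU/set0]_(i < n) F i `<=` Wset n%:R c w `&` `[0%R, 1%R]%classic.
  move=> x; rewrite -(bigcup_mkord n (fun i => piece n%:R c w i%:Z)).
  move=> [i /= hi px]; split; first exact: (@piece_Wset _ _ c w _ x c0 cw px).
  move: px => /andP[h1 h2].
  have hin : (i%:R + 1 <= (n%:R : R)) by rewrite -[1]/(1%:R) -natrD ler_nat addn1.
  rewrite /= in_itv /=; apply/andP; split.
    have : 0 <= n%:R * x by have : (0 : R) <= i%:R by []; lra.
    by rewrite pmulr_rge0.
  have : n%:R * x <= n%:R * 1 by lra.
  by rewrite ler_pM2l.
have mF : forall i, measurable (F i) by move=> i; apply: measurable_piece.
have tF : trivIset setT F.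
  move=> i j _ _ [x [Fi Fj]].
  have := @piece_floor _ _ c w _ x c0 cw Fi; have := @piece_floor _ _ c w _ x c0 cw Fj.
  by move=> -> [] /val_inj.
have mA : \big[setU/set0]_(i < n) F i \in measurable.
  by rewrite inE; apply: bigsetU_measurable => i _.
have mB : Wset n%:R c w `&` `[0%R, 1%R]%classic \in measurable.
  by rewrite inE; apply: measurableI => //; apply: measurable_Wset.
apply: le_trans (@le_measure _ _ _ lam _ _ mA mB sub).
rewrite (@measure_bigsetU_ord _ _ _ lam n predT F mF tF).
rewrite (eq_bigr (fun=> (w / n%:R)%:E)); last by move=> i _; rewrite /F /=; apply: lam_piece.
rewrite sumEFin sumr_const card_ord lee_fin -(mulr_natr (w / n%:R) n) divfK ?gt_eqF //.
Qed.

End Marg.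
Section Unif.
Context (R : realType).
Local Notation lam := (@lebesgue_measure R).

Lemma unif_lam (U : set R) : measurable U ->
  uniform_prob (@ltr01 R) U = lam (U `&` `[0%R, 1%R]%classic).
Proof.
move=> mU; rewrite /uniform_prob integral_uniform_pdf.
rewrite (eq_integral (fun=> 1%:E)); last first.
  move=> x; rewrite inE => -[_]; rewrite /= in_itv /= /uniform_pdf => ->.
  by rewrite subr0 invr1.
by rewrite integral_cst ?mul1e //; apply: measurableI.
Qed.

Lemma fine_ge (x : \bar R) (w : R) : (w%:E <= x)%E -> (x <= 1%:E)%E -> w <= fine x.
Proof. by case: x. Qed.

Lemma fine_le' (x : \bar R) (y : R) : (0 <= x)%E -> (x <= y%:E)%E -> fine x <= y.
Proof. by case: x. Qed.

End Unif.
Local Notation lam := (@lebesgue_measure _).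

Theorem proposition5p1 (R : realType) (d : measure_display) (T : measurableType d)
  (P : probability T R) (X : {RV P >-> R})
  (HX : forall A : set R, measurable A ->
          distribution P X A = uniform_prob (@ltr01 R) A)
  (a : nat -> nat) (r : nat -> R)
  (Ha : forall n, (1 <= n)%N -> (0 < a n)%N)
  (Hr : forall n, (1 <= n)%N -> 0 < r n <= 1) :
  (Theta_r P (fun n w => fracpart ((a n)%:R * X w)%R) r <=
   3%:E * expeR (4%:E * \sum_(1 <= n <oo) ((a n)%:R / (r n * (a n.+1)%:R))%R%:E))%E.
Proof.
rewrite /Theta_r; apply: ge_ereal_sup => _ [k hk <-].
rewrite /theta; apply: ge_ereal_sup => _ [n n1 <-].
pose A i : R := (a i)%:R.
pose q i := qn r i.
pose C i : R := (k i)%:~R / (q i)%:~R.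
pose Wd i : R := ((q i)%:~R)^-1.
have q1 : forall i, (1 <= i)%N -> 0 < q i /\ (q i)%:~R <= 2 / r i.
  move=> i /Hr /andP[r0 r1]; rewrite /q /qn; split.
    by rewrite ceil_gt0 invr_gt0.
  have := ceilB1_lt (r i)^-1; rewrite intrB => h.
  have : 1 <= (r i)^-1 by rewrite invf_ge1.
  lra.
have hyp : forall i, (1 <= i)%N ->
    [/\ 0 < A i, 0 <= C i, 0 < Wd i & C i + Wd i <= 1].
  move=> i i1; have /andP[k0 kq] := hk i i1; have [q0 _] := q1 i i1.
  have qR : (0 : R) < (q i)%:~R by rewrite ltr0z.
  split.
  - by rewrite /A ltr0n; apply: Ha.
  - by rewrite /C divr_ge0 // ?ler0z // ltW.
  - by rewrite /Wd invr_gt0.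
  - rewrite /C /Wd -[X in _ + X]mul1r -mulrDl ler_pdivrMr // mul1r.
    by rewrite -[1]/(1%:~R) -intrD ler_int /q; lia.
have hB : forall i, Ink r i (k i) = [set y | C i <= y < C i + Wd i].
  move=> i; rewrite /Ink /C /Wd /q intrD mulrDl mul1r //.
have mBs : measurable (Bset A C Wd 1 n) by apply: measurable_Bset.
have eJ : joint_prob P (fun n w => fracpart ((a n)%:R * X w)) (fun n => Ink r n (k n)) n
    = lam (Bset A C Wd 1 n `&` `[0%R, 1%R]%classic).
  rewrite -unif_lam // -HX // /joint_prob /distribution /=.
  congr (P _); apply/seteqP; split => w /=.
    move=> h i hi; have := h i; rewrite hB /=; apply; lia.
  move=> h i hi; have := h i; rewrite hB /=; apply; lia.
have eM : forall i, (1 <= i)%N ->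
    marg_prob P (fun n w => fracpart ((a n)%:R * X w)) (fun n => Ink r n (k n)) i
    = lam (Wi A C Wd i `&` `[0%R, 1%R]%classic).
  move=> i i1; have mW := @measurable_Wi _ _ _ _ hyp i i1.
  rewrite -unif_lam // -HX // /marg_prob /distribution /=.
  by congr (P _); apply/seteqP; split => w /=; rewrite hB.
case: n n1 eJ mBs => [//|len] _ eJ mBs.
rewrite eJ.
set J := lam _.
set PM := \prod_(1 <= i < len.+2) _.
set PW := \prod_(1 <= i < len.+2) Wd i.
have PW0 : 0 < PW.
  rewrite /PW big_nat_cond; apply: prodr_gt0 => i /andP[/andP[i1 _] _].
  by have [] := hyp i i1.
have hPM : PW <= PM.
  rewrite /PW /PM big_nat_cond [X in _ <= X]big_nat_cond.
  apply: ler_prod => i /andP[/andP[i1 _] _].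
  have [_ C0 W0 CW] := hyp i i1.
  rewrite ltW //=; rewrite eM //; apply: fine_ge.
    by apply: marg_lb => //; apply: Ha.
  rewrite -unif_lam; last exact: (@measurable_Wi _ _ _ _ hyp i i1).
  apply: probability_le1; exact: (@measurable_Wi _ _ _ _ hyp i i1).
have PM0 : 0 < PM by apply: lt_le_trans hPM.
pose e i := 2 * A i / (Wd i * A i.+1).
pose t i := A i / (r i * A i.+1).
set E := expR (\sum_(1 <= i < len.+1) e i).
have hbeta := @beta_bound _ _ _ _ hyp len 1 isT.
rewrite add1n -/PW -/E in hbeta.
have A1 : 1 <= A 1 by rewrite /A ler1n; apply: Ha.
have hJ : fine J <= 3 * E * PW.
  apply: le_trans (_ : (A 1 + 2) * beta A Wd 1 len <= _).
    apply: fine_le'; first exact: measure_ge0.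
    rewrite /J setIC; exact: (@final _ _ _ _ hyp len).
  apply: le_trans (_ : (A 1 + 2) * (PW / A 1 * E) <= _).
    apply: ler_wpM2l => //; lra.
  have E0 : 0 < E by apply: expR_gt0.
  have -> : (A 1 + 2) * (PW / A 1 * E) = PW * E * (1 + 2 / A 1).
    by field; rewrite gt_eqF //; lra.
  rewrite [X in _ <= X](_ : _ = PW * E * 3); last by ring.
  apply: ler_wpM2l; first by apply: mulr_ge0; apply: ltW.
  have : 2 / A 1 <= 2 by rewrite ler_pdivrMr; lra.
  lra.
have hE : \sum_(1 <= i < len.+1) e i <= 4 * \sum_(1 <= i < len.+1) t i.
  rewrite mulr_sumr big_nat_cond [X in _ <= X]big_nat_cond.
  apply: ler_sum => i /andP[/andP[i1 _] _].
  have [A0 _ W0 _] := hyp i i1.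
  have /hyp[A0' _ _ _] : (1 <= i.+1)%N by [].
  have [q0 qr] := q1 i i1.
  have /Hr/andP[r0 _] := i1.
  have qR : (0 : R) < (q i)%:~R by rewrite ltr0z.
  have -> : e i = 2 * A i / A i.+1 * (q i)%:~R.
    by rewrite /e /Wd; field; rewrite !gt_eqF.
  have -> : 4 * t i = 2 * A i / A i.+1 * (2 / r i).
    by rewrite /t; field; rewrite !gt_eqF.
  apply: ler_wpM2l => //; apply: divr_ge0; [lra | exact: ltW].
have ht0 : forall i, (1 <= i)%N -> 0 <= t i.
  move=> i i1; have [A0 _ _ _] := hyp i i1.
  have /hyp[A0' _ _ _] : (1 <= i.+1)%N by [].
  have /Hr/andP[r0 _] := i1.
  by rewrite /t divr_ge0 ?ltW // mulr_gt0.
apply: (@le_trans _ _ (3%:E * expeR (4%:E * (\sum_(1 <= i < len.+1) t i)%:E))%E).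
  rewrite /= -EFinM lee_fin ler_pdivrMr //.
  apply: le_trans hJ _; rewrite -!mulrA; apply: ler_wpM2l => //.
  apply: ler_pM => //; [exact/ltW/expR_gt0 | exact: ltW | ].
  by rewrite /E ler_expR.
apply: lee_wpmul2l => //; rewrite lee_expeR; apply: lee_wpmul2l => //.
rewrite -sumEFin.
apply: (le_trans _ (nneseries_lim_ge _ _)); first exact: lexx.
by move=> i i1 _; rewrite lee_fin; apply: ht0.
Qed.
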